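(* Let $N\ge2$, $J=1$, let $h_0,h_1\in\mathbb{C}^N$ with $\|h_0\|=\|h_1\|=1$ and $h_0^{\sf H}h_1=\sin\tau\,e^{i\phi_z}$, where $\tau\in[0,\pi/2)$ and $\phi_z\in[0,2\pi)$; let $\sigma_0^2,\sigma_1^2,\sigma_n^2>0$ and $c_1=|c_1|e^{i\phi_c}$ with $|c_1|\le\sigma_0\sigma_1$, $\phi_c\in[0,2\pi)$. Then for all $\lambda\ge0$, \[ \mathrm{MSE}(\lambda)=\frac{|\delta_2|^2(\sigma_1^2\cos^2\tau+\sigma_n^2)}{g(\lambda)^2}-\frac{2\sigma_n^2\delta_1\tan\tau}{g(\lambda)}+\sigma_n^2(\tan^2\tau+1), \] where $g(\lambda):=\lambda\cos^2\tau+\sigma_1^2\cos^2\tau+\sigma_n^2$, $\delta_1:=\sigma_n^2\tan\tau-|c_1|\cos\tau\cos(\phi_c+\phi_z)$, $\delta_2:=\sigma_n^2\tan\tau-|c_1|\cos\tau\,e^{i(\phi_c+\phi_z)}$. Moreover: 1. If $\delta_2=0$ (hence $\delta_1=0$), then $\mathrm{MSE}(\lambda)=\sigma_n^2(\tan^2\tau+1)$ for all $\lambda\ge0$. 2. If $\delta_2\neq0$, let $\gamma:=\delta_1\sigma_n^2\tan\tau/|\delta_2|^2$. (a) If $\gamma\le0$ (equivalently $\delta_1\tan\tau\le0$), $\mathrm{MSE}(\lambda)$ is decreasing on $[0,\infty)$ and $\inf_{\lambda\ge0}\mathrm{MSE}(\lambda)=\lim_{\lambda\to\infty}\mathrm{MSE}(\lambda)=J_{\rm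 MSE}(w_{\rm ZF})$. (b) If $\gamma\ge1$, $\mathrm{MSE}(\lambda)$ is increasing on $[0,\infty)$ and minimized at $\lambda=0$. (c) If $\gamma\in(0,1)$, $\mathrm{MSE}$ is minimized over $[0,\infty)$ by $\lambda=\dfrac{\sigma_1^2\cos^2\tau+\sigma_n^2}{\cos^2\tau}\cdot\dfrac{1-\gamma}{\gamma}>0$.
   Context: Complex single-interference model: $y(k)=s_0(k)h_0+s_1(k)h_1+n(k)\in\mathbb{C}^N$, with zero-mean jointly weakly stationary complex signals $s_0,s_1$, $\sigma_j^2:=E|s_j(k)|^2$, $c_1:=E[s_0^*(k)s_1(k)]$, and noise $n(k)\sim\mathcal{CN}(0,\sigma_n^2I)$ uncorrelated with the signals. $R:=E[y(k)y(k)^{\sf H}]$. For $\lambda\ge0$, $R_\lambda:=R+\lambda h_1h_1^{\sf H}$ and the RZF beamformer is $w_{\rm RZF}(\lambda):=R_\lambda^{-1}h_0/(h_0^{\sf H}R_\lambda^{-1}h_0)$. The ZF beamformer is $w_{\rm ZF}:=R^{-1}H(H^{\sf H}R^{-1}H)^{-1}e_1$ with $H:=[h_0\ h_1]$, $e_1:=[1,0]^{\sf T}$. The MSE of $w$ is $J_{\rm MSE}(w):=E|w^{\sf H}y(k)-s_0(k)|^2$, and $\mathrm{MSE}(\lambda):=J_{\rm MSE}(w_{\rm RZF}(\lambda))$. *)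

(* Defs.v *)
From HB Require Import structures.
From mathcomp Require Import all_boot all_order all_algebra.
From mathcomp Require Import all_classical all_reals all_analysis.
From mathcomp Require Import complex.
Import Order.TTheory GRing.Theory Num.Theory.
Import numFieldNormedType.Exports.

Set Implicit Arguments.
Unset Strict Implicit.
Unset Printing Implicit Defensive.

Local Open Scope ring_scope.

Section RZF.
Variable R : realType.
Local Notation C := R[i].

Definition rc (x : R) : C := (x%:C)%C.

Definition expi (x : R) : C := Complex (cos x) (sin x).

Definition modc (z : C) : R := complex.Re `|z|.

Definition hermT m n (A : 'M[C]_(m, n)) : 'M[C]_(n, m) := (map_mx Num.conj A)^T.

Variable N : nat.
Implicit Types (w : 'cV[C]_N) (c : C).

(* Covariance R = E[y y^H] of y = s0 h0 + s1 h1 + n, with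
   sigma_j^2 = s_j^2, c1 = E[s0^* s1] (so E[s1 s0^*] = c1, E[s0 s1^*] = c1^* ),
   noise CN(0, sn^2 I) uncorrelated with the signals. *)
Definition covR (h0 h1 : 'cV[C]_N) (s0 s1 sn : R) (c1 : C) : 'M[C]_N :=
  rc (s0 ^+ 2) *: (h0 *m hermT h0) + Num.conj c1 *: (h0 *m hermT h1)
  + c1 *: (h1 *m hermT h0) + rc (s1 ^+ 2) *: (h1 *m hermT h1)
  + rc (sn ^+ 2) *: 1%:M.

(* cross-correlation E[y s0^*] = sigma_0^2 h0 + c1 h1 *)
Definition xcorr (h0 h1 : 'cV[C]_N) (s0 : R) (c1 : C) : 'cV[C]_N := rc (s0 ^+ 2) *: h0 + c1 *: h1.

(* J_MSE(w) = E|w^H y - s0|^2, expanded through second-order statistics: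
   w^H R w - w^H r - r^H w + sigma_0^2  (a real number). *)
Definition JMSE (h0 h1 : 'cV[C]_N) (s0 s1 sn : R) (c1 : C) w : R :=
  complex.Re ((hermT w *m covR h0 h1 s0 s1 sn c1 *m w) 0 0
              - (hermT w *m xcorr h0 h1 s0 c1) 0 0
              - (hermT (xcorr h0 h1 s0 c1) *m w) 0 0)
  + s0 ^+ 2.

Definition covRl (h0 h1 : 'cV[C]_N) (s0 s1 sn : R) (c1 : C) (l : R) : 'M[C]_N :=
  covR h0 h1 s0 s1 sn c1 + rc l *: (h1 *m hermT h1).

Definition wRZF (h0 h1 : 'cV[C]_N) (s0 s1 sn : R) (c1 : C) (l : R) : 'cV[C]_N :=
  let Ri := invmx (covRl h0 h1 s0 s1 sn c1 l) in
  ((hermT h0 *m Ri *m h0) 0 0)^-1 *: (Ri *m h0).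

Definition wZF (h0 h1 : 'cV[C]_N) (s0 s1 sn : R) (c1 : C) : 'cV[C]_N :=
  let Ri := invmx (covR h0 h1 s0 s1 sn c1) in
  let H := row_mx h0 h1 in
  Ri *m H *m invmx (hermT H *m Ri *m H) *m (delta_mx 0 0 : 'cV[C]_(1 + 1)).

Definition MSE (h0 h1 : 'cV[C]_N) (s0 s1 sn : R) (c1 : C) (l : R) : R :=
  JMSE h0 h1 s0 s1 sn c1 (wRZF h0 h1 s0 s1 sn c1 l).

End RZF.

(* Main.v *)
Require Import Defs.
From HB Require Import structures.
From mathcomp Require Import all_boot all_order all_algebra.
From mathcomp Require Import all_classical all_reals all_analysis.
From mathcomp Require Import complex.
From mathcomp Require Import ring lra.
Import Order.TTheory GRing.Theory Num.Theory.
Import numFieldNormedType.Exports.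
Local Open Scope classical_set_scope.
Local Open Scope ring_scope.
Set Implicit Arguments.
Unset Strict Implicit.
Unset Printing Implicit Defensive.
Section C1.
Variable R : realType.
Local Notation C := R[i].
Lemma conjE (x : C) : Num.conj x = (x^*)%C.
Proof. by []. Qed.
Lemma rc_conj (x : R) : Num.conj (rc x) = rc x.
Proof. by rewrite conjE /rc /= oppr0. Qed.
Lemma expi_conj (x : R) : expi x * Num.conj (expi x) = 1.
Proof.
rewrite conjE /expi /=; apply/eqP; rewrite eq_complex /=.
apply/andP; split; apply/eqP; [rewrite -(cos2Dsin2 x) | ]; ring.
Qed.
Lemma expiD (x y : R) : expi x * expi y = expi (x + y).
Proof.
rewrite /expi /=; apply/eqP; rewrite eq_complex /= cosD sinD.
by apply/andP; split; apply/eqP; ring.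
Qed.
Lemma expi_addJ (x : R) : expi x + Num.conj (expi x) = rc (2 * cos x).
Proof.
rewrite conjE /expi /rc /=; apply/eqP; rewrite eq_complex /=.
by apply/andP; split; apply/eqP; ring.
Qed.
Lemma rcM (x y : R) : rc (x * y) = rc x * rc y.
Proof. by rewrite /rc rmorphM. Qed.
Lemma rcD (x y : R) : rc (x + y) = rc x + rc y.
Proof. by rewrite /rc rmorphD. Qed.
Lemma rcB (x y : R) : rc (x - y) = rc x - rc y.
Proof. by rewrite /rc rmorphB. Qed.
Lemma rcX (x : R) n : rc (x ^+ n) = rc x ^+ n.
Proof. by rewrite /rc rmorphXn. Qed.
Lemma rc1 : rc (1 : R) = 1. Proof. by rewrite /rc rmorph1. Qed.
Lemma rc0 : rc (0 : R) = 0. Proof. by rewrite /rc rmorph0. Qed.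
Lemma rcN (x : R) : rc (- x) = - rc x. Proof. by rewrite /rc rmorphN. Qed.
Lemma rcV (x : R) : rc (x^-1) = (rc x)^-1.
Proof. by rewrite /rc fmorphV. Qed.
Lemma Re_rc (x : R) : complex.Re (rc x) = x. Proof. by []. Qed.
Lemma rc_inj (x y : R) : rc x = rc y -> x = y. Proof. by case. Qed.
End C1.
Section M.
Variable R : realType.
Local Notation C := R[i].
Lemma hermT_mul m n p (A : 'M[C]_(m,n)) (B : 'M[C]_(n,p)) :
  hermT (A *m B) = hermT B *m hermT A.
Proof. by rewrite /hermT map_mxM trmx_mul. Qed.
Lemma hermTD m n (A B : 'M[C]_(m,n)) : hermT (A + B) = hermT A + hermT B.
Proof. by rewrite /hermT map_mxD linearD. Qed.
Lemma hermTZ m n a (A : 'M[C]_(m,n)) : hermT (a *: A) = Num.conj a *: hermT A.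
Proof. by rewrite /hermT map_mxZ linearZ. Qed.
Lemma hermTK m n (A : 'M[C]_(m,n)) : hermT (hermT A) = A.
Proof. by apply/matrixP => i j; rewrite /hermT !mxE conjCK. Qed.
Lemma hermT0 m n : hermT (0 : 'M[C]_(m,n)) = 0.
Proof. by apply/matrixP => i j; rewrite /hermT !mxE conjC0. Qed.
Lemma hermT_entry m n (A : 'M[C]_(m,n)) i j : hermT A j i = Num.conj (A i j).
Proof. by rewrite /hermT !mxE. Qed.
Lemma mul_mx11 m (h : 'M[C]_(m,1)) (M : 'M[C]_1) : h *m M = M 0 0 *: h.
Proof. by rewrite {1}[M]mx11_scalar mul_mx_scalar. Qed.

Variable N : nat.
Definition ip (u v : 'cV[C]_N) : C := (hermT u *m v) 0 0.
Lemma ipJ u v : ip v u = Num.conj (ip u v).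
Proof. by rewrite /ip -hermT_entry hermT_mul hermTK. Qed.
Lemma ipDr u v w : ip u (v + w) = ip u v + ip u w.
Proof. by rewrite /ip mulmxDr mxE. Qed.
Lemma ipZr u a v : ip u (a *: v) = a * ip u v.
Proof. by rewrite /ip -scalemxAr mxE. Qed.
Lemma ipDl u v w : ip (v + w) u = ip v u + ip w u.
Proof. by rewrite /ip hermTD mulmxDl mxE. Qed.
Lemma ipZl u a v : ip (a *: v) u = Num.conj a * ip v u.
Proof. by rewrite /ip hermTZ -scalemxAl mxE. Qed.
Lemma ip0r u : ip u 0 = 0.
Proof. by rewrite /ip mulmx0 mxE. Qed.
Lemma ip0l u : ip 0 u = 0.
Proof. by rewrite /ip hermT0 mul0mx mxE. Qed.
Lemma ipNr u v : ip u (- v) = - ip u v.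
Proof. by rewrite -scaleN1r ipZr mulN1r. Qed.
Lemma outer_mul (a b v : 'cV[C]_N) : a *m hermT b *m v = ip b v *: a.
Proof. by rewrite -mulmxA mul_mx11. Qed.
Lemma ip_ge0 v : 0 <= ip v v.
Proof.
rewrite /ip mxE; apply: sumr_ge0 => k _.
by rewrite hermT_entry mulrC mul_conjC_ge0.
Qed.
Lemma ip_eq0 v : ip v v = 0 -> v = 0.
Proof.
rewrite /ip mxE => /eqP; rewrite psumr_eq0 => [/allP H|k _]; last first.
  by rewrite hermT_entry mulrC mul_conjC_ge0.
apply/matrixP => i j; rewrite (ord1 j) mxE.
have := H i (mem_index_enum _); rewrite hermT_entry mulrC mul_conjC_eq0.
by move/eqP.
Qed.
End M.
Section Cov.
Variable R : realType.
Local Notation C := R[i].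
Variable N : nat.
Variables (h0 h1 : 'cV[C]_N) (s0 s1 sn : R) (c1 : C).
Local Notation ip := (@ip R N).
Lemma covRl_mul l v : covRl h0 h1 s0 s1 sn c1 l *m v =
  (rc (s0^+2) * ip h0 v + Num.conj c1 * ip h1 v) *: h0
  + (c1 * ip h0 v + rc (s1^+2 + l) * ip h1 v) *: h1 + rc (sn^+2) *: v.
Proof.
rewrite /covRl /covR !mulmxDl -!scalemxAl !outer_mul mul1mx.
apply/matrixP => i j; rewrite !mxE rcD; ring.
Qed.
Lemma covRl0 : covRl h0 h1 s0 s1 sn c1 0 = covR h0 h1 s0 s1 sn c1.
Proof. by rewrite /covRl rc0 scale0r addr0. Qed.
Lemma covRl_quad l v : ip v (covRl h0 h1 s0 s1 sn c1 l *m v) =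
  (rc (s0^+2) * ip h0 v + Num.conj c1 * ip h1 v) * Num.conj (ip h0 v)
  + (c1 * ip h0 v + rc (s1^+2 + l) * ip h1 v) * Num.conj (ip h1 v)
  + rc (sn^+2) * ip v v.
Proof. by rewrite covRl_mul !ipDr !ipZr -!(ipJ h0) -!(ipJ h1). Qed.
Lemma covRl_pos ac l v : 0 < s0 -> 0 <= ac -> ac <= s0 * s1 -> 0 < sn -> 0 <= l ->
  c1 * Num.conj c1 = rc (ac ^+ 2) ->
  ip v (covRl h0 h1 s0 s1 sn c1 l *m v) = 0 -> v = 0.
Proof.
move=> s0p ac0 acle snp l0 cc Q0.
set a := ip h0 v; set b := ip h1 v.
set X := rc (s0^+2) * a + Num.conj c1 * b.
have key : rc (s0^+2) * ip v (covRl h0 h1 s0 s1 sn c1 l *m v) =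
  X * Num.conj X + rc (s0^+2 * (s1^+2 + l) - ac^+2) * (b * Num.conj b)
  + rc (s0^+2 * sn^+2) * ip v v.
  rewrite covRl_quad -/a -/b /X rcB rcM rcM -cc rmorphD !rmorphM /=.
  rewrite conjCK rc_conj.
  ring.
move: key; rewrite Q0 mulr0 => /esym /eqP.
have h1p : 0 <= X * Num.conj X by apply: mul_conjC_ge0.
have h2p : 0 <= rc (s0^+2 * (s1^+2 + l) - ac^+2) * (b * Num.conj b).
  apply: mulr_ge0; last exact: mul_conjC_ge0.
  rewrite /rc ler0c subr_ge0.
  have h : ac^+2 <= (s0 * s1)^+2 by nra.
  have : 0 <= s0^+2 * l by nra.
  nra.
have h3p : 0 <= rc (s0^+2 * sn^+2) * ip v v.
  by apply: mulr_ge0; [rewrite /rc ler0c mulr_ge0 // sqr_ge0 | exact: ip_ge0].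
rewrite paddr_eq0 ?addr_ge0 // paddr_eq0 // => /andP [_ /eqP].
move/eqP; rewrite mulf_eq0 => /orP [|/eqP]; last exact: ip_eq0.
rewrite /rc => /eqP [] /eqP; rewrite mulf_eq0 !expf_eq0 /= => /orP [] /eqP E.
  by move: s0p; rewrite E ltxx.
by move: snp; rewrite E ltxx.
Qed.
End Cov.
Section Gen.
Variable R : realType.
Local Notation C := R[i].
Lemma unitmx_ker n (A : 'M[C]_n) :
  (forall v : 'cV_n, A *m v = 0 -> v = 0) -> A \in unitmx.
Proof.
move=> H; rewrite unitmxE unitfE -det_tr; apply/negP => /det0P [v vn0 vA].
have : A *m v^T = 0 by rewrite -[A]trmxK -trmx_mul vA trmx0.
move/H => /(congr1 trmx); rewrite trmxK trmx0 => v0.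
by rewrite v0 eqxx in vn0.
Qed.
Variable N : nat.
Lemma inv_apply (A : 'M[C]_N) (u h k : 'cV[C]_N) D : A \in unitmx ->
  A *m u = D *: h -> ip k u != 0 -> invmx A *m h = D^-1 *: u.
Proof.
move=> Au E nz.
have Hu : u = D *: (invmx A *m h) by rewrite scalemxAr -E mulKmx.
have D0 : D != 0.
  apply/negP => /eqP D0; move: nz; rewrite Hu D0 scale0r ip0r eqxx //.
by rewrite Hu scalerA mulVf // scale1r.
Qed.
Lemma rowmx_mul (h0 h1 : 'cV[C]_N) (v : 'cV[C]_(1 + 1)) :
  row_mx h0 h1 *m v = v (lshift 1 0) 0 *: h0 + v (rshift 1 0) 0 *: h1.
Proof.
by rewrite -{1}[v]vsubmxK mul_row_col !mul_mx11 !mxE.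
Qed.
Lemma hermT_row (h0 h1 : 'cV[C]_N) :
  hermT (row_mx h0 h1) = col_mx (hermT h0) (hermT h1).
Proof. by rewrite /hermT map_row_mx tr_row_mx. Qed.
End Gen.
Section RZF.
Variable R : realType.
Local Notation C := R[i].
Variable N : nat.
Variables (h0 h1 : 'cV[C]_N) (s0 s1 sn ac S c2 : R) (c1 : C).
Local Notation ip := (@ip R N).
Let z := ip h0 h1.
Hypotheses (H00 : ip h0 h0 = 1) (H11 : ip h1 h1 = 1)
  (Hzz : z * Num.conj z = rc (S ^+ 2)) (Hc2 : 1 - S ^+ 2 = c2) (c2p : 0 < c2)
  (Hcc : c1 * Num.conj c1 = rc (ac ^+ 2))
  (s0p : 0 < s0) (ac0 : 0 <= ac) (acle : ac <= s0 * s1) (snp : 0 < sn).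

Let H10 : ip h1 h0 = Num.conj z.
Proof. by rewrite ipJ. Qed.

Lemma Rl_unit l : 0 <= l -> covRl h0 h1 s0 s1 sn c1 l \in unitmx.
Proof.
move=> l0; apply: unitmx_ker => v Rv.
by apply: (covRl_pos (h0 := h0) (h1 := h1) s0p ac0 acle snp l0 Hcc); rewrite Rv ip0r.
Qed.

Definition gl l := l * c2 + s1 ^+ 2 * c2 + sn ^+ 2.
Definition al l := rc (sn ^+ 2 + (s1 ^+ 2 + l)) + c1 * z.
Definition bl l := - (c1 + rc (s1 ^+ 2 + l) * Num.conj z).
Definition ul l := al l *: h0 + bl l *: h1.

Lemma gl_gt0 l : 0 <= l -> 0 < gl l.
Proof.
move=> l0; rewrite /gl; have := mulr_ge0 l0 (ltW c2p).
have := mulr_ge0 (sqr_ge0 s1) (ltW c2p); have : 0 < sn ^+ 2 by rewrite exprn_gt0.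
lra.
Qed.

Lemma ip_h0_ul l : ip h0 (ul l) = rc (gl l).
Proof.
rewrite /ul ipDr !ipZr H00 -/z.
have -> : al l * 1 + bl l * z = rc (sn ^+ 2 + (s1 ^+ 2 + l)) - rc (s1 ^+ 2 + l) * (z * Num.conj z).
  rewrite /al /bl; ring.
rewrite Hzz -rcM -rcB /gl -Hc2; congr rc; ring.
Qed.

Lemma ip_h1_ul l : ip h1 (ul l) = rc (sn ^+ 2) * Num.conj z - c1 * rc c2.
Proof.
rewrite /ul ipDr !ipZr H11 H10.
have -> : al l * Num.conj z + bl l * 1 = rc (sn ^+ 2) * Num.conj z + c1 * (z * Num.conj z - 1).
  rewrite /al /bl rcD; ring.
rewrite Hzz -Hc2 rcB rcX rc1 rcX; ring.
Qed.

Lemma wRZF_eq l : 0 <= l -> wRZF h0 h1 s0 s1 sn c1 l = rc (gl l)^-1 *: ul l.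
Proof.
move=> l0.
set D := rc (s0^+2) * ip h0 (ul l) + Num.conj c1 * ip h1 (ul l) + rc (sn^+2) * al l.
have Ru : covRl h0 h1 s0 s1 sn c1 l *m ul l = D *: h0.
  rewrite covRl_mul.
  have E : c1 * ip h0 (ul l) + rc (s1 ^+ 2 + l) * ip h1 (ul l) + rc (sn^+2) * bl l = 0.
    rewrite /ul !ipDr !ipZr H00 H11 H10 -/z /al /bl !rcD; ring.
  apply/matrixP => i j; rewrite /D /ul !mxE.
  rewrite -[X in _ = X]addr0 -(mulr0 (h1 i j)) -E; ring.
have gp := gl_gt0 l0.
have nz : ip h0 (ul l) != 0.
  by rewrite ip_h0_ul /rc; apply/eqP => -[] /eqP; rewrite gt_eqF.
have Ri := inv_apply (Rl_unit l0) Ru nz.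
rewrite /wRZF -mulmxA Ri -/(ip _ _) ipZr ip_h0_ul scalerA rcV.
have D0 : D != 0.
  apply/negP => /eqP D0.
  have : ul l = 0 by rewrite -(mulKmx (Rl_unit l0) (ul l)) Ru D0 scale0r mulmx0.
  by move=> u0; move: nz; rewrite u0 ip0r eqxx.
have g0 : rc (gl l) != 0.
  by rewrite /rc; apply/eqP => -[] /eqP; rewrite gt_eqF.
congr (_ *: _); field.
by rewrite D0 g0.
Qed.

Lemma ip_def (u v : 'cV[C]_N) : (hermT u *m v) 0 0 = ip u v.
Proof. by []. Qed.

Lemma JMSE_dl w : ip h0 w = 1 -> JMSE h0 h1 s0 s1 sn c1 w =
  complex.Re (rc (s1^+2) * (ip w h1 * Num.conj (ip w h1)) + rc (sn^+2) * ip w w).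
Proof.
move=> hw; rewrite /JMSE -mulmxA !ip_def -covRl0 covRl_quad /xcorr.
have hw' : ip w h0 = 1 by rewrite ipJ hw conjC1.
rewrite ipDr ipDl !ipZr !ipZl (ipJ w h1) hw hw' conjC1 rc_conj addr0 conjCK.
have -> : forall x, complex.Re x + s0^+2 = complex.Re (x + rc (s0^+2)).
  by move=> x; rewrite raddfD.
congr complex.Re; ring.
Qed.

Variable P : R.
Hypothesis HP : c1 * z + Num.conj c1 * Num.conj z = rc (2 * P).

Definition X1 := sn^+4 * S^+2 - 2 * sn^+2 * c2 * P + c2^+2 * ac^+2.
Definition X2 l := (sn^+2 + (s1^+2 + l)) * gl l + 2 * (s1^+2 + l) * c2 * P
  + c2 * ac^+2 - (s1^+2 + l) * sn^+2 * S^+2.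

Lemma E1 l : Num.conj (ip h1 (ul l)) * ip h1 (ul l) = rc X1.
Proof.
rewrite ip_h1_ul rmorphB !rmorphM /= !rc_conj conjCK.
apply: (@etrans _ _ (rc (sn^+4) * (z * Num.conj z) - rc (sn^+2 * c2) *
   (c1 * z + Num.conj c1 * Num.conj z) + rc (c2^+2) * (c1 * Num.conj c1))).
  rewrite !rcM; ring.
rewrite Hzz HP Hcc -!rcM -rcB -rcD /X1; congr rc; ring.
Qed.

Lemma E2 l : Num.conj (al l) * rc (gl l) + Num.conj (bl l) * ip h1 (ul l) = rc (X2 l).
Proof.
rewrite ip_h1_ul /al /bl rmorphN !rmorphD !rmorphM /= !rc_conj conjCK.
have eg : rc (gl l) = rc (sn^+2) + rc ((s1^+2 + l) * c2).
  by rewrite -rcD /gl; congr rc; ring.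
apply: (@etrans _ _ (rc ((sn^+2 + (s1^+2 + l)) * gl l) + rc ((s1^+2 + l) * c2) *
   (c1 * z + Num.conj c1 * Num.conj z) + rc c2 * (c1 * Num.conj c1)
   - rc ((s1^+2 + l) * sn^+2) * (z * Num.conj z))).
  rewrite eg !rcM !rcD; ring.
rewrite Hzz HP Hcc -!rcM -!rcD -rcB /X2; congr rc; ring.
Qed.

Lemma MSE_real l : 0 <= l -> MSE h0 h1 s0 s1 sn c1 l =
  (s1^+2 * X1 + sn^+2 * X2 l) / gl l ^+ 2.
Proof.
move=> l0; have gp := gl_gt0 l0.
have g0 : rc (gl l) != 0.
  by rewrite /rc; apply/eqP => -[] /eqP; rewrite gt_eqF.
rewrite /MSE wRZF_eq // JMSE_dl; last first.
  by rewrite ipZr ip_h0_ul rcV mulVf.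
have Euu : ip (ul l) (ul l) = Num.conj (al l) * rc (gl l) + Num.conj (bl l) * ip h1 (ul l).
  by rewrite {1}/ul ipDl !ipZl ip_h0_ul.
rewrite !ipZl !ipZr rc_conj Euu E2 (ipJ h1 (ul l)) rmorphM /= rc_conj conjCK.
have -> : rc (s1 ^+ 2) * (rc (gl l)^-1 * Num.conj (ip h1 (ul l)) * (rc (gl l)^-1 * ip h1 (ul l)))
  + rc (sn ^+ 2) * (rc (gl l)^-1 * (rc (gl l)^-1 * rc (X2 l))) =
  rc (s1^+2) * rc ((gl l)^-1) * rc ((gl l)^-1) * rc X1
  + rc (sn^+2) * rc ((gl l)^-1) * rc ((gl l)^-1) * rc (X2 l).
  rewrite -(E1 l); ring.
rewrite -!rcM -rcD /rc /=; field.
by rewrite gt_eqF.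
Qed.

Lemma rc_neq0 (x : R) : x != 0 -> rc x != 0.
Proof. by move=> x0; rewrite /rc; apply/eqP => -[] /eqP; rewrite (negbTE x0). Qed.

Lemma Ri_h0 : exists a b, invmx (covR h0 h1 s0 s1 sn c1) *m h0 = a *: h0 + b *: h1.
Proof.
set D := rc (s0^+2) * ip h0 (ul 0) + Num.conj c1 * ip h1 (ul 0) + rc (sn^+2) * al 0.
have Ru : covRl h0 h1 s0 s1 sn c1 0 *m ul 0 = D *: h0.
  rewrite covRl_mul.
  have E : c1 * ip h0 (ul 0) + rc (s1 ^+ 2 + 0) * ip h1 (ul 0) + rc (sn^+2) * bl 0 = 0.
    rewrite /ul !ipDr !ipZr H00 H11 H10 -/z /al /bl !rcD; ring.
  apply/matrixP => i j; rewrite /D /ul !mxE.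
  rewrite -[X in _ = X]addr0 -(mulr0 (h1 i j)) -E; ring.
have nz : ip h0 (ul 0) != 0 by rewrite ip_h0_ul rc_neq0 // gt_eqF // gl_gt0.
have := inv_apply (Rl_unit (lexx 0)) Ru nz; rewrite covRl0 => ->.
by exists (D^-1 * al 0), (D^-1 * bl 0); rewrite /ul scalerDr !scalerA.
Qed.

Lemma Ri_h1 : exists a b, invmx (covR h0 h1 s0 s1 sn c1) *m h1 = a *: h0 + b *: h1.
Proof.
set a1 := rc (s0^+2) * z + Num.conj c1.
set b1 := - (rc (sn^+2 + s0^+2) + Num.conj c1 * Num.conj z).
set u1 := a1 *: h0 + b1 *: h1.
set D := c1 * ip h0 u1 + rc (s1 ^+ 2 + 0) * ip h1 u1 + rc (sn^+2) * b1.
have Ru : covRl h0 h1 s0 s1 sn c1 0 *m u1 = D *: h1.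
  rewrite covRl_mul.
  have E : rc (s0^+2) * ip h0 u1 + Num.conj c1 * ip h1 u1 + rc (sn^+2) * a1 = 0.
    rewrite /u1 !ipDr !ipZr H00 H11 H10 -/z /a1 /b1 !rcD; ring.
  apply/matrixP => i j; rewrite /D /u1 !mxE.
  rewrite -[X in _ = X]add0r -(mulr0 (h0 i j)) -E; ring.
have nz : ip h1 u1 != 0.
  have -> : ip h1 u1 = - rc (s0^+2 * c2 + sn^+2).
    rewrite /u1 ipDr !ipZr H11 H10 /a1 /b1.
    apply: (@etrans _ _ (rc (s0^+2) * (z * Num.conj z) - rc (sn ^+ 2 + s0 ^+ 2))).
      ring.
    rewrite Hzz -rcM -rcB -Hc2 -rcN; congr rc; ring.
  rewrite oppr_eq0 rc_neq0 // gt_eqF //.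
  by apply: ltr_wpDl; [rewrite mulr_ge0 ?sqr_ge0 ?ltW | rewrite exprn_gt0].
have := inv_apply (Rl_unit (lexx 0)) Ru nz; rewrite covRl0 => ->.
by exists (D^-1 * a1), (D^-1 * b1); rewrite /u1 scalerDr !scalerA.
Qed.

Lemma JMSE_ZF : JMSE h0 h1 s0 s1 sn c1 (wZF h0 h1 s0 s1 sn c1) = sn^+2 / c2.
Proof.
set Ri := invmx (covR h0 h1 s0 s1 sn c1).
set X := row_mx h0 h1.
set A := hermT X *m Ri *m X.
have RU : covR h0 h1 s0 s1 sn c1 \in unitmx by rewrite -covRl0 Rl_unit.
have c2z : 1 - z * Num.conj z = rc c2 by rewrite Hzz -Hc2 rcB rc1.
have c2n : rc c2 != 0 by rewrite rc_neq0 // gt_eqF.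
have AU : A \in unitmx.
  apply: unitmx_ker => x Ax.
  set y := Ri *m (X *m x).
  have Ry : covR h0 h1 s0 s1 sn c1 *m y = X *m x by rewrite /y mulKVmx.
  have Xy : hermT X *m y = 0 by rewrite /y !mulmxA -/A -Ax.
  have y0 : y = 0.
    apply: (covRl_pos (h0:=h0) (h1:=h1) s0p ac0 acle snp (lexx 0) Hcc).
    rewrite covRl0 Ry /ip mulmxA.
    have -> : hermT y *m X = 0 by rewrite -[X]hermTK -hermT_mul Xy hermT0.
    by rewrite mul0mx mxE.
  have : X *m x = 0 by rewrite -Ry y0 mulmx0.
  rewrite rowmx_mul; set x0 := x (lshift 1 0) 0; set x1 := x (rshift 1 0) 0 => Xx0.
  have e0 : x0 + z * x1 = 0.
    by move: (congr1 (ip h0) Xx0); rewrite ipDr !ipZr H00 ip0r -/z mulr1 mulrC.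
  have e1 : Num.conj z * x0 + x1 = 0.
    by move: (congr1 (ip h1) Xx0); rewrite ipDr !ipZr H11 H10 ip0r mulr1 mulrC.
  have x10 : x1 = 0.
    have : x1 * (1 - z * Num.conj z) = 0.
      have -> : x1 * (1 - z * Num.conj z) = (Num.conj z * x0 + x1) - Num.conj z * (x0 + z * x1).
        ring.
      by rewrite e0 e1 mulr0 subr0.
    by rewrite c2z => /eqP; rewrite mulf_eq0 (negbTE c2n) orbF => /eqP.
  have x00 : x0 = 0 by move: e0; rewrite x10 mulr0 addr0.
  rewrite -[x]vsubmxK.
  have -> : usubmx x = 0 by apply/matrixP => i j; rewrite !ord1 !mxE.
  have -> : dsubmx x = 0 by apply/matrixP => i j; rewrite !ord1 !mxE.
  by rewrite col_mx0.
set e := (delta_mx 0 0 : 'cV[C]_(1 + 1)).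
set m := invmx A *m e.
set w := wZF h0 h1 s0 s1 sn c1.
have wE : w = Ri *m (X *m m) by rewrite /w /wZF !mulmxA.
have hX : hermT X *m w = e by rewrite wE /m !mulmxA -/A mulmxV // mul1mx.
rewrite hermT_row mul_col_mx in hX.
have w0 : ip h0 w = 1.
  have := congr1 (fun M : 'M[C]_(1 + 1, 1) => M (lshift 1 0) 0) hX.
  by rewrite /= col_mxEu => E; rewrite /ip E /e mxE.
have w1 : ip h1 w = 0.
  have := congr1 (fun M : 'M[C]_(1 + 1, 1) => M (rshift 1 0) 0) hX.
  by rewrite /= col_mxEd => E; rewrite /ip E /e mxE.
have [a [b wab]] : exists a b, w = a *: h0 + b *: h1.
  have [a0 [b0 E0]] := Ri_h0; have [a1 [b1 E1']] := Ri_h1.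
  exists (m (lshift 1 0) 0 * a0 + m (rshift 1 0) 0 * a1).
  exists (m (lshift 1 0) 0 * b0 + m (rshift 1 0) 0 * b1).
  rewrite wE rowmx_mul mulmxDr -!scalemxAr E0 E1'.
  apply/matrixP => i j; rewrite !mxE; ring.
have ea : a + z * b = 1 by move: w0; rewrite wab ipDr !ipZr H00 -/z mulr1 mulrC.
have eb : Num.conj z * a + b = 0 by move: w1; rewrite wab ipDr !ipZr H11 H10 mulr1 mulrC.
have ac2 : a = rc (c2^-1).
  have : a * rc c2 = 1.
    rewrite -c2z.
    have -> : a * (1 - z * Num.conj z) = (a + z * b) - z * (Num.conj z * a + b) by ring.
    by rewrite ea eb mulr0 subr0.
  by move=> H; rewrite rcV -[(rc c2)^-1]mul1r -H mulfK.
have ww : ip w w = Num.conj a.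
  by rewrite {1}wab ipDl !ipZl w0 w1 mulr1 mulr0 addr0.
rewrite JMSE_dl // ww ac2 rc_conj (ipJ h1 w) w1 conjC0 mul0r mulr0 add0r.
by rewrite -rcM /rc /=.
Qed.
End RZF.
Section RealAux.
Variable R : realType.
Lemma quad_dec (a b x y : R) : 0 < a -> b <= 0 -> 0 < y -> y < x ->
  a * y ^+ 2 - 2 * b * y < a * x ^+ 2 - 2 * b * x.
Proof.
move=> a0 b0 y0 yx; rewrite -subr_gt0.
have -> : a * x ^+ 2 - 2 * b * x - (a * y ^+ 2 - 2 * b * y) = (x - y) * (a * (x + y) - 2 * b) by ring.
apply: mulr_gt0; first by rewrite subr_gt0.
have : 0 < a * (x + y) by apply: mulr_gt0 => //; lra.
lra.
Qed.
Lemma quad_inc (m A b x y : R) : 0 < m -> 0 < A -> m <= b -> 0 < y -> y < x -> A * x <= 1 ->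
  m * A * x ^+ 2 - 2 * b * x < m * A * y ^+ 2 - 2 * b * y.
Proof.
move=> m0 A0 mb y0 yx Ax; rewrite -subr_gt0.
have -> : m * A * y ^+ 2 - 2 * b * y - (m * A * x ^+ 2 - 2 * b * x) = (x - y) * (2 * b - m * (A * x + A * y)) by ring.
apply: mulr_gt0; first by rewrite subr_gt0.
have h1 : A * y < A * x by rewrite ltr_pM2l.
have h2 : m * (A * x + A * y) < m * 2 by rewrite ltr_pM2l //; lra.
lra.
Qed.
Lemma quad_min (a b x : R) : 0 < a ->
  a * (b / a) ^+ 2 - 2 * b * (b / a) <= a * x ^+ 2 - 2 * b * x.
Proof.
move=> a0; rewrite -subr_ge0.
have -> : a * x ^+ 2 - 2 * b * x - (a * (b / a) ^+ 2 - 2 * b * (b / a)) = a * (x - b / a) ^+ 2.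
  by field; rewrite gt_eqF.
by rewrite mulr_ge0 ?sqr_ge0 ?ltW.
Qed.
Lemma quad_est (m A B K g e : R) : 0 < A -> 0 <= m -> A <= g -> 0 < e ->
  (m + 2 * `|B|) / e < g -> `|K - (m * A * g^-1 ^+ 2 - 2 * B * g^-1 + K)| < e.
Proof.
move=> A0 m0 Ag e0 Qg.
have g0 : 0 < g by apply: lt_le_trans Ag.
have Qg' : m + 2 * `|B| < e * g by rewrite -ltr_pdivrMl // mulrC.
have -> : K - (m * A * g^-1 ^+ 2 - 2 * B * g^-1 + K) = - ((m * (A / g) - 2 * B) / g).
  by field; rewrite gt_eqF.
rewrite normrN normrM normfV (gtr0_norm g0) ltr_pdivrMr //.
apply: le_lt_trans Qg'; apply: le_trans (ler_normB _ _) _.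
rewrite normrM (normrM 2) (ger0_norm m0) (ger0_norm (ler0n _ 2)).
have h1 : A / g <= 1 by rewrite ler_pdivrMr // mul1r.
have h2 : 0 <= A / g by rewrite divr_ge0 // ltW.
rewrite (ger0_norm h2) lerD2r; rewrite -[X in _ <= X]mulr1; exact: ler_wpM2l.
Qed.
End RealAux.
Unset Implicit Arguments.

Theorem theorem3 (R : realType) (N : nat) (h0 h1 : 'cV[R[i]]_N)
  (tau phiz s0 s1 sn ac phic : R) :
  (2 <= N)%N ->
  (hermT h0 *m h0) 0 0 = 1 -> (hermT h1 *m h1) 0 0 = 1 ->
  (hermT h0 *m h1) 0 0 = rc (sin tau) * expi phiz ->
  0 <= tau < pi / 2 -> 0 <= phiz < 2 * pi ->
  0 < s0 -> 0 < s1 -> 0 < sn ->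
  0 <= ac -> ac <= s0 * s1 -> 0 <= phic < 2 * pi ->
  let c1 := rc ac * expi phic in
  let M := MSE h0 h1 s0 s1 sn c1 in
  let ct2 := cos tau ^+ 2 in
  let g := fun l : R => l * ct2 + s1 ^+ 2 * ct2 + sn ^+ 2 in
  let d1 := sn ^+ 2 * tan tau - ac * cos tau * cos (phic + phiz) in
  let d2 := rc (sn ^+ 2 * tan tau) - rc (ac * cos tau) * expi (phic + phiz) in
  [/\ (* closed form *)
      (forall l, 0 <= l ->
         M l = modc d2 ^+ 2 * (s1 ^+ 2 * ct2 + sn ^+ 2) / g l ^+ 2
               - 2 * sn ^+ 2 * d1 * tan tau / g l
               + sn ^+ 2 * (tan tau ^+ 2 + 1)),
      (* case 1 *)
      (d2 = 0 -> d1 = 0 /\ forall l, 0 <= l -> M l = sn ^+ 2 * (tan tau ^+ 2 + 1)) &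
      (* case 2 *)
      (d2 != 0 ->
        let gam := d1 * sn ^+ 2 * tan tau / modc d2 ^+ 2 in
        [/\ (gam <= 0 <-> d1 * tan tau <= 0),
            (gam <= 0 ->
               (forall x y, 0 <= x -> x < y -> M y < M x) /\
               (M l @[l --> +oo] --> JMSE h0 h1 s0 s1 sn c1 (wZF h0 h1 s0 s1 sn c1)) /\
               inf [set M l | l in [set l : R | 0 <= l]]
                 = JMSE h0 h1 s0 s1 sn c1 (wZF h0 h1 s0 s1 sn c1)),
            (1 <= gam ->
               (forall x y, 0 <= x -> x < y -> M x < M y) /\
               (forall l, 0 <= l -> M 0 <= M l)) &
            (0 < gam < 1 ->
               let lopt := (s1 ^+ 2 * ct2 + sn ^+ 2) / ct2 * ((1 - gam) / gam) in
               0 < lopt /\ forall l, 0 <= l -> M lopt <= M l)])].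
Proof.
move=> N2 H00 H11 H01 /andP[tau0 tault] _ s0p s1p snp ac0 acle _ c1 M ct2 g d1 d2.
have Cs0 : 0 < cos tau.
  apply: cos_gt0_pihalf; rewrite tault andbT; apply: lt_le_trans tau0.
  by rewrite oppr_lt0 divr_gt0 // pi_gt0.
have c2p : 0 < ct2 by rewrite /ct2 exprn_gt0.
have Hc2 : 1 - sin tau ^+ 2 = ct2 by rewrite /ct2 cos2sin2.
have Hz : ip h0 h1 = rc (sin tau) * expi phiz by exact: H01.
have Hzz : ip h0 h1 * Num.conj (ip h0 h1) = rc (sin tau ^+ 2).
  rewrite Hz rmorphM /= rc_conj.
  have -> : rc (sin tau) * expi phiz * (rc (sin tau) * Num.conj (expi phiz)) =
    rc (sin tau) * rc (sin tau) * (expi phiz * Num.conj (expi phiz)) by ring.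
  by rewrite expi_conj mulr1 -rcM expr2.
have Hcc : c1 * Num.conj c1 = rc (ac ^+ 2).
  rewrite /c1 rmorphM /= rc_conj.
  have -> : rc ac * expi phic * (rc ac * Num.conj (expi phic)) =
    rc ac * rc ac * (expi phic * Num.conj (expi phic)) by ring.
  by rewrite expi_conj mulr1 -rcM expr2.
have HP : c1 * ip h0 h1 + Num.conj c1 * Num.conj (ip h0 h1) =
    rc (2 * (ac * sin tau * cos (phic + phiz))).
  rewrite Hz /c1 !rmorphM /= !rc_conj.
  have -> : rc ac * expi phic * (rc (sin tau) * expi phiz) +
    rc ac * Num.conj (expi phic) * (rc (sin tau) * Num.conj (expi phiz)) =
    rc ac * rc (sin tau) * (expi phic * expi phiz + Num.conj (expi phic * expi phiz)).
    by rewrite rmorphM /=; ring.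
  by rewrite expiD expi_addJ -!rcM; congr rc; ring.
have MR := MSE_real H00 H11 Hzz Hc2 c2p Hcc s0p ac0 acle snp HP.
have JZ := JMSE_ZF H00 H11 Hzz Hc2 c2p Hcc s0p ac0 acle snp.
have tanE : tan tau = sin tau / cos tau by [].
have Cn0 : cos tau != 0 by rewrite gt_eqF.
have HS2 : sin tau ^+ 2 = 1 - ct2 by rewrite -Hc2; ring.
have Red2 : complex.Re d2 = d1.
  by rewrite /d2 /d1 /rc /expi /=; ring.
have Imd2 : complex.Im d2 = - (ac * cos tau * sin (phic + phiz)).
  by rewrite /d2 /rc /expi /=; ring.
have md_eq : modc d2 ^+ 2 = d1 ^+ 2 + (ac * cos tau * sin (phic + phiz)) ^+ 2.
  rewrite /modc normc_def Red2 Imd2 /= sqr_sqrtr ?addr_ge0 ?sqr_ge0 //.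
  by rewrite sqrrN.
have md' : modc d2 ^+ 2 = sn ^+ 4 * (1 - ct2) / ct2
    - 2 * sn ^+ 2 * (ac * sin tau * cos (phic + phiz)) + ac ^+ 2 * ct2.
  rewrite md_eq exprMn (sin2cos2 (phic + phiz)) -HS2 /d1 tanE /ct2.
  field; exact: Cn0.
have d1t : d1 * tan tau = sn ^+ 2 * (1 - ct2) / ct2 - ac * sin tau * cos (phic + phiz).
  rewrite /d1 tanE -HS2 /ct2; field; exact: Cn0.
have t2 : tan tau ^+ 2 + 1 = ct2^-1.
  rewrite tanE /ct2.
  have -> : (sin tau / cos tau) ^+ 2 + 1 = (cos tau ^+ 2 + sin tau ^+ 2) / cos tau ^+ 2.
    by field.
  by rewrite cos2Dsin2 mul1r.
have gE l : g l = gl s1 sn ct2 l by [].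
have gp l : 0 <= l -> 0 < g l by move=> l0; rewrite gE gl_gt0.
have CF : forall l, 0 <= l ->
    M l = modc d2 ^+ 2 * (s1 ^+ 2 * ct2 + sn ^+ 2) / g l ^+ 2
               - 2 * sn ^+ 2 * d1 * tan tau / g l
               + sn ^+ 2 * (tan tau ^+ 2 + 1).
  move=> l l0; rewrite /M MR // /X1 /X2 -gE HS2 md' t2.
  have -> : 2 * sn ^+ 2 * d1 * tan tau = 2 * sn ^+ 2 * (d1 * tan tau) by ring.
  rewrite d1t /g; field.
  by rewrite gt_eqF //= gt_eqF // gp.
set A' := s1 ^+ 2 * ct2 + sn ^+ 2.
set K := sn ^+ 2 * (tan tau ^+ 2 + 1).
set B := sn ^+ 2 * d1 * tan tau.
have Ap : 0 < A'.
  rewrite /A'; have := mulr_ge0 (sqr_ge0 s1) (ltW c2p).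
  have : 0 < sn ^+ 2 by rewrite exprn_gt0.
  lra.
have gA l : g l = l * ct2 + A' by rewrite /g /A'; ring.
have Ag l : 0 <= l -> A' <= g l.
  by move=> l0; rewrite gA lerDr mulr_ge0 // ltW.
have CF2 l : 0 <= l -> M l = modc d2 ^+ 2 * A' * (g l)^-1 ^+ 2 - 2 * B * (g l)^-1 + K.
  move=> l0; rewrite CF // /B /K /A'; move: (modc d2 ^+ 2) (tan tau) => md tn; field.
  by rewrite gt_eqF // gp.
have Xp l : 0 <= l -> 0 < (g l)^-1 by move=> l0; rewrite invr_gt0 gp.
have Xlt x y : 0 <= x -> x < y -> (g y)^-1 < (g x)^-1.
  move=> x0 xy; rewrite ltf_pV2 ?posrE ?gp //; last by apply: ltW; apply: le_lt_trans xy.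
  by rewrite !gA ltrD2r ltr_pM2r.
have AX l : 0 <= l -> A' * (g l)^-1 <= 1.
  by move=> l0; rewrite mulrC ler_pdivrMl ?gp // mulr1 Ag.
split.
- exact: CF.
- move=> d20.
  have d10 : d1 = 0 by rewrite -Red2 d20.
  have modc0 : modc (0 : R[i]) = 0 by rewrite /modc normr0.
  split => // l l0; rewrite CF // d10 d20 modc0.
  by rewrite expr2 !mul0r mulr0 !mul0r subr0 add0r.
move=> d2n0 gam.
have mdp : 0 < modc d2 ^+ 2.
  rewrite exprn_gt0 //.
  have : 0 < `|d2| by rewrite normr_gt0.
  by rewrite ltcE => /andP [_]; rewrite /modc.
have gamE : gam = B / modc d2 ^+ 2 by rewrite /gam /B; ring.
move: (modc d2 ^+ 2) mdp CF2 gamE => md mdp CF2 gamE.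
have BE : B = sn ^+ 2 * (d1 * tan tau) by rewrite /B; ring.
have sn2 : 0 < sn ^+ 2 by rewrite exprn_gt0.
have gamB : (gam <= 0) = (B <= 0) by rewrite gamE pmulr_lle0 // invr_gt0.
have JK : JMSE h0 h1 s0 s1 sn c1 (wZF h0 h1 s0 s1 sn c1) = K by rewrite JZ /K t2.
rewrite JK.
split.
- by rewrite gamB BE pmulr_rle0.
- move=> /[dup] gam0; rewrite gamB => B0.
  have dec : forall x y, 0 <= x -> x < y -> M y < M x.
    move=> x y x0 xy; have y0 : 0 <= y by apply: ltW; apply: le_lt_trans xy.
    rewrite !CF2 // ltrD2r; apply: quad_dec => //; first exact: mulr_gt0.
      exact: Xp.
    exact: Xlt.
  have est : forall e, 0 < e -> forall t, (md + 2 * `|B|) / e / ct2 < t ->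
      0 <= t /\ `|K - M t| < e.
    move=> e e0 t Tt.
    have T0 : 0 <= (md + 2 * `|B|) / e / ct2.
      apply: divr_ge0; last exact: ltW.
      apply: divr_ge0; last exact: ltW.
      by apply: addr_ge0; [exact: ltW | rewrite mulr_ge0].
    have t0 : 0 <= t by apply: ltW; apply: le_lt_trans Tt.
    split => //; rewrite CF2 //; apply: quad_est => //; first exact: ltW.
      by rewrite Ag.
    rewrite gA; apply: (lt_le_trans (y := t * ct2)); last by rewrite lerDl ltW.
    by rewrite -ltr_pdivrMr.
  split; first exact: dec.
  split.
    apply/cvgrPdist_lt => e e0.
    apply: filterS (nbhs_pinfty_gt (num_real ((md + 2 * `|B|) / e / ct2))).
    by move=> t Tt; have [] := est e e0 t Tt.
  have lbK : lbound [set M l | l in [set l : R | 0 <= l]] K.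
    move=> y [l /= l0 <-]; rewrite CF2 //.
    have q1 : 0 <= md * A' * (g l)^-1 ^+ 2.
      by rewrite mulr_ge0 ?sqr_ge0 // mulr_ge0 // ltW.
    have q2 : B * (g l)^-1 <= 0 by rewrite pmulr_lle0 // Xp.
    lra.
  apply/eqP; rewrite eq_le; apply/andP; split.
    apply/ler_addgt0Pr => e e0.
    set T := (md + 2 * `|B|) / e / ct2.
    have [t0 hK] := est e e0 (T + 1) (ltr_pwDr ltr01 (lexx T)).
    have : inf [set M l | l in [set l : R | 0 <= l]] <= M (T + 1).
      by apply: ge_inf; [exists K | exists (T + 1)].
    move: hK; rewrite ltr_norml => /andP [q1 q2] q3.
    apply: (le_trans q3); apply: ltW; move: q1; move: (M (T + 1)) => mT q1; lra.
  apply: lb_le_inf lbK; exists (M 0); exists 0 => //=.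
- move=> g1.
  have mB : md <= B by move: g1; rewrite gamE ler_pdivlMr // mul1r.
  have inc : forall x y, 0 <= x -> x < y -> M x < M y.
    move=> x y x0 xy; have y0 : 0 <= y by apply: ltW; apply: le_lt_trans xy.
    rewrite !CF2 // ltrD2r; apply: (quad_inc (m := md) (A := A')) => //.
    - exact: Xp.
    - exact: Xlt.
    - exact: AX.
  split; first exact: inc.
  move=> l; rewrite le_eqVlt => /orP [/eqP <- //|lp].
  by apply/ltW/inc.
move=> /andP [gp0 g1] lopt.
have Bp : 0 < B by move: gp0; rewrite gamE pmulr_lgt0 // invr_gt0.
have lp : 0 < lopt.
  apply: mulr_gt0; first exact: (divr_gt0 Ap c2p).
  apply: divr_gt0; [by rewrite subr_gt0 | exact: gp0].
split; first exact: lp.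
move=> l l0.
have gl : g lopt = A' / gam.
  rewrite gA /lopt; field.
  by rewrite !gt_eqF.
have Xl : (g lopt)^-1 = B / (md * A').
  rewrite gl gamE; field.
  by rewrite !gt_eqF.
rewrite !CF2; [|exact: l0|exact: ltW].
rewrite Xl lerD2r.
exact: quad_min (mulr_gt0 mdp Ap).
Qed.
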